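(* Assume the setting below and $p>\sum_{k=0}^{N-1}L_k$. For $0\le j\le N-1$ and $x\in\mathbb R$ define $$\alpha_{GB,j}(x)=\sum_{k=j}^{j+N-1}L^G_k\,C\left\lceil\frac{x-o_{k,j}+L^G_k+\sum_{q=j}^{k}L_q}{p-\sum_{q=j}^{j+N-1}L_q}\right\rceil .$$ Then for all $s\in\mathbb R$ and $t\ge0$, $$C\cdot\Delta t_{GB}(s,s+t)\le\max_{0\le j\le N-1}\alpha_{GB,j}\big(t-\Delta t_{ST}(s,s+t)\big).$$
   Context: Fix an output port with physical link rate $C>0$. Its gate control list (GCL) is periodic with period $p>0$ and contains $N\ge 1$ scheduled-traffic (ST) windows per period. Window $k\in\{0,\dots,N-1\}$ is the interval $[o_k,o_k+L_k)$, where $0\le o_0<o_1<\dots<o_{N-1}<p$, $L_k\ge 0$, $o_k+L_k\le o_{k+1}$ for $k<N-1$ and $o_{N-1}+L_{N-1}\le o_0+p$. Indices are extended to all integers periodically: $o_{k+N}=o_k+p$, $L_{k+N}=L_k$. Relative offsets are $o_{j,i}=o_j-o_i$. Let $S=\bigcup_{k\in\mathbb Z}[o_k,o_k+L_k)$ and for $s\le t$ let $\Delta t_{ST}(s,t)$ be the Lebesgue measure of $S\cap[s,t]$. Guard bands: for each $k$, $L^G_k=\min\{\ell/C,\ o_k-(o_{k-1}+L_{k-1})\}$, where $\ell>0$ is the maximal frame size of the AVB flows of classes $M_1,\dots,M_i$ competing at the port; thus $L^G_{k+N}=L^G_k$ and the guard band of window $k$ is $[o_k-L^G_k,o_k)$.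 Let $G=\bigcup_{k\in\mathbb Z}[o_k-L^G_k,o_k)$ and for $s\le t$ let $\Delta t_{GB}(s,t)$ be the Lebesgue measure of $G\cap[s,t]$. *)

(* Defs.v *)
From HB Require Import structures.
From mathcomp Require Import all_boot all_order all_algebra.
From mathcomp Require Import all_classical all_reals all_analysis.
Set Implicit Arguments. Unset Strict Implicit. Unset Printing Implicit Defensive.
Import Order.TTheory GRing.Theory Num.Theory.
Local Open Scope ring_scope.
Local Open Scope classical_set_scope.

Section GCL.
Variables (R : realType) (N : nat) (p : R) (o L : nat -> R).

(* periodic extension: o_{k} for k : int, o_{k+N} = o_k + p *)
Definition oe (k : int) : R :=
  o (absz (k %% (N:int))%Z) + ((k %/ (N:int))%Z)%:~R * p.
Definition Le (k : int) : R := L (absz (k %% (N:int))%Z).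

Definition LG (C ell : R) (k : int) : R :=
  Num.min (ell / C) (oe k - (oe (k - 1) + Le (k - 1))).

Definition ST_set : set R :=
  [set x | exists k : int, oe k <= x < oe k + Le k].
Definition GB_set (C ell : R) : set R :=
  [set x | exists k : int, oe k - LG C ell k <= x < oe k].

Definition cc (a b : R) : set R := [set x | a <= x <= b].

Definition dt_ST (a b : R) : \bar R := lebesgue_measure (ST_set `&` cc a b).
Definition dt_GB (C ell a b : R) : \bar R :=
  lebesgue_measure (GB_set C ell `&` cc a b).

Definition alpha_GB (C ell : R) (j : nat) (x : R) : R :=
  \sum_(j <= k < j + N)
    LG C ell k%:Z * C *
    (Num.ceil ((x - (oe k%:Z - oe j%:Z) + LG C ell k%:Z
                + \sum_(j <= q < k.+1) Le q%:Z)
               / (p - \sum_(j <= q < j + N) Le q%:Z)))%:~R.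

End GCL.

(* Main.v *)
Require Import Defs.
From HB Require Import structures.
From mathcomp Require Import all_boot all_order all_algebra.
From mathcomp Require Import all_classical all_reals all_analysis.
From mathcomp Require Import ring lra zify.
Import Order.TTheory GRing.Theory Num.Theory.
Local Open Scope ring_scope.
Local Open Scope classical_set_scope.

Section Meas.
Variable R : realType.
Local Notation lam := (@lebesgue_measure R).

Lemma lam_sub {A B : set R} : A `<=` B -> (lam A <= lam B)%E.
Proof. move=> AB. rewrite /lebesgue_measure /lebesgue_stieltjes_measure /measure_extension.
 exact: le_mu_ext. Qed.

Lemma lam_U (A B : set R) : (lam (A `|` B) <= lam A + lam B)%E.
Proof. rewrite /lebesgue_measure /lebesgue_stieltjes_measure /measure_extension.
 exact: outer_measureU2. Qed.

Lemma lam_ge0 (A : set R) : (0 <= lam A)%E.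
Proof. exact: measure_ge0. Qed.

Lemma lam_cc {a b : R} : a <= b -> (lam (cc a b) <= (b - a)%:E)%E.
Proof.
move=> ab.
have -> : cc a b = `[a, b] by rewrite set_itvcc.
rewrite lebesgue_measure_itv /=.
case: ifP => _; first by rewrite EFinB.
by rewrite lee_fin subr_ge0.
Qed.

Lemma lam_sub_cc (A : set R) (a b : R) : a <= b -> A `<=` cc a b -> (lam A <= (b - a)%:E)%E.
Proof. move=> ab AB; apply: le_trans (lam_cc ab); exact: lam_sub. Qed.

Lemma cover_sum (n : nat) (P : nat -> set R) (b : nat -> R) (A : set R) :
  (forall i, (i < n)%N -> (lam (P i) <= (b i)%:E)%E) ->
  (forall z, A z -> exists2 i, (i < n)%N & P i z) ->
  (lam A <= (\sum_(i < n) b i)%:E)%E.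
Proof.
elim: n A => [|n IH] A hP hA.
  rewrite big_ord0.
  have -> : A = set0 by apply/seteqP; split => // z /hA [].
  by rewrite measure0.
rewrite big_ord_recr /= EFinD.
have sub : A `<=` [set z | A z /\ exists2 i, (i < n)%N & P i z] `|` P n.
  move=> z Az; have [i ilt Pi] := hA z Az.
  case: (ltnP i n) => hi; first by left; split => //; exists i.
  by right; have -> : n = i by lia.
apply: le_trans (lam_sub sub) _.
apply: le_trans (lam_U _ _) _.
apply: leeD; last exact: hP.
apply: IH; first by move=> i hi; apply: hP; lia.
by move=> z [].
Qed.

Lemma fine_le_bound (x : \bar R) (B : R) : (0 <= x)%E -> (x <= B%:E)%E -> fine x <= B.
Proof. by case: x => //= r _; rewrite lee_fin. Qed.

End Meas.
Arguments lam_sub {R A B}.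
Arguments lam_U {R}.
Arguments lam_ge0 {R}.
Arguments lam_cc {R a b}.
Arguments lam_sub_cc {R A a b}.
Arguments cover_sum {R n P b A}.
Arguments fine_le_bound {R x B}.


Section Proof4.
Variables (R : realType) (C p ell : R) (N : nat) (o L : nat -> R).
Hypotheses (hC : 0 < C) (hp : 0 < p) (hN : (1 <= N)%N) (hell : 0 < ell)
  (ho0 : 0 <= o 0%N)
  (hoinc : forall k : nat, (k.+1 < N)%N -> o k < o k.+1)
  (holast : o N.-1 < p)
  (hL : forall k : nat, (k < N)%N -> 0 <= L k)
  (hwin : forall k : nat, (k.+1 < N)%N -> o k + L k <= o k.+1)
  (hwinlast : o N.-1 + L N.-1 <= o 0%N + p)
  (hpL : \sum_(k < N) L k < p).

Local Notation OE := (oe N p o).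
Local Notation LE := (Le N L).
Local Notation LGG := (LG N p o L C ell).

Lemma NZ : (N%:Z != 0).
Proof. by rewrite eqz_nat -lt0n. Qed.

Lemma oeE (d : int) (r : nat) : (r < N)%N -> OE (d * N%:Z + r%:Z) = o r + d%:~R * p.
Proof.
move=> rN; rewrite /oe modzMDl divzMDl ?NZ // modz_small ?divz_small ?addr0 //.
Qed.

Lemma LeE (d : int) (r : nat) : (r < N)%N -> LE (d * N%:Z + r%:Z) = L r.
Proof.
move=> rN; rewrite /Le modzMDl modz_small //.
Qed.

Lemma decomp (i : int) : exists (d : int) (r : nat), (r < N)%N /\ i = d * N%:Z + r%:Z.
Proof.
exists (i %/ N%:Z)%Z, (absz (i %% N%:Z)%Z).
have h0 : 0 <= (i %% N%:Z)%Z by rewrite modz_ge0 ?NZ.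
have e : ((absz (i %% N%:Z)%Z)%:Z = (i %% N%:Z)%Z) by rewrite gez0_abs.
split; last by rewrite e -divz_eq.
by rewrite -ltz_nat e ltz_pmod.
Qed.

Lemma oe_shift (i b : int) : OE (i + b * N%:Z) = OE i + b%:~R * p.
Proof.
have [d [r [rN ->]]] := decomp i.
have -> : d * N%:Z + r%:Z + b * N%:Z = (d + b) * N%:Z + r%:Z by ring.
rewrite !oeE // rmorphD /=; ring.
Qed.

Lemma Le_shift (i b : int) : LE (i + b * N%:Z) = LE i.
Proof.
have [d [r [rN ->]]] := decomp i.
have -> : d * N%:Z + r%:Z + b * N%:Z = (d + b) * N%:Z + r%:Z by ring.
by rewrite !LeE.
Qed.

Lemma LG_shift (i b : int) : LGG (i + b * N%:Z) = LGG i.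
Proof.
rewrite /LG.
have -> : i + b * N%:Z - 1 = (i - 1) + b * N%:Z by ring.
rewrite !oe_shift Le_shift.
congr Num.min; ring.
Qed.

Lemma Le_ge0 i : 0 <= LE i.
Proof. have [d [r [rN ->]]] := decomp i. by rewrite LeE // hL. Qed.

Lemma gap_ge0 i : OE i + LE i <= OE (i + 1).
Proof.
have [d [r [rN ->]]] := decomp i.
rewrite oeE // LeE //.
case: (ltnP r.+1 N) => hr.
  have -> : d * N%:Z + r%:Z + 1 = d * N%:Z + (r.+1)%:Z by rewrite intS; ring.
  rewrite oeE //. have := hwin r hr. lra.
have er : r = N.-1 by lia.
have -> : d * N%:Z + r%:Z + 1 = (d + 1) * N%:Z + 0%:Z.
  rewrite er; have := prednK hN => hh.
  have : (N.-1)%:Z + 1 = N%:Z by rewrite addrC -intS hh.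
  move=> hh2; rewrite -addrA hh2 addr0; ring.
rewrite oeE // rmorphD /=. rewrite er mulrDl mul1r. have h := hwinlast. lra.
Qed.


Lemma LG_ge0 i : 0 <= LGG i.
Proof.
rewrite /LG le_min; apply/andP; split.
  by rewrite divr_ge0 // ltW.
have := gap_ge0 (i - 1); rewrite subrK subr_ge0 => h; by [].
Qed.

Lemma LG_le i : OE (i - 1) + LE (i - 1) <= OE i - LGG i.
Proof.
have h : LGG i <= OE i - (OE (i - 1) + LE (i - 1)) by rewrite /LG ge_min lexx orbT.
lra.
Qed.

Lemma oe_mono i (n : nat) : OE i <= OE (i + n%:Z).
Proof.
elim: n => [|n IH]; first by rewrite addr0.
apply: (le_trans IH).
have := gap_ge0 (i + n%:Z); have := Le_ge0 (i + n%:Z).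
have -> : i + n.+1%:Z = i + n%:Z + 1 by rewrite intS; ring.
lra.
Qed.

Lemma oe_le i k : i <= k -> OE i <= OE k.
Proof.
move=> ik; have -> : k = i + (absz (k - i))%:Z by rewrite gez0_abs ?subr_ge0 //; ring.
exact: oe_mono.
Qed.

Lemma oe_lt_win i k : i < k -> OE i + LE i <= OE k.
Proof.
move=> ik; apply: (le_trans (gap_ge0 i)); apply: oe_le.
by rewrite -ltzD1 ltrD2r.
Qed.


Lemma sum_period (f : int -> R) : (forall i, f (i + N%:Z) = f i) ->
  forall j, \sum_(r < N) f (j + r%:Z) = \sum_(r < N) f r%:Z.
Proof.
move=> hf.
have step : forall j, \sum_(r < N) f (j + 1 + r%:Z) = \sum_(r < N) f (j + r%:Z).
  move=> j; have [n hn] : exists n, N = n.+1 by exists N.-1; rewrite prednK.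
  have e : j + 1 + n%:Z = j + N%:Z by rewrite hn intS; ring.
  move: (hf j); rewrite -e => fe.
  rewrite hn [in LHS]big_ord_recr [in RHS]big_ord_recl /= fe addr0 addrC.
  congr (_ + _); apply: eq_bigr => i _ /=.
  by congr f; rewrite /bump /= add1n intS addrA [_ + 1]addrC.
have hpos : forall n : nat, \sum_(r < N) f (n%:Z + r%:Z) = \sum_(r < N) f (0 + r%:Z).
  elim=> [//|n IH]; by rewrite intS addrC step.
have hneg : forall n : nat, \sum_(r < N) f (- n%:Z + r%:Z) = \sum_(r < N) f (0 + r%:Z).
  elim=> [|n IH]; first by rewrite oppr0.
  rewrite -IH; have -> : - n%:Z = - (n.+1)%:Z + 1 by rewrite intS; ring.
  by rewrite step.
move=> j; have -> : \sum_(r < N) f r%:Z = \sum_(r < N) f (0 + r%:Z) by apply: eq_bigr => i _; rewrite add0r.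
case: j => n; first exact: hpos.
by rewrite NegzE hneg.
Qed.

Lemma exists_j0 (s : R) : exists j0 : int, OE (j0 - 1) <= s /\ s < OE j0.
Proof.
set d := Num.floor ((s - o 0%N) / p).
have h1 : OE (d * N%:Z + 0%:Z) <= s.
  rewrite oeE //; have := floor_le ((s - o 0%N) / p); rewrite -/d ler_pdivlMr // => h; lra.
have hPN : s < OE (d * N%:Z + N%:Z).
  have -> : d * N%:Z + N%:Z = (d + 1) * N%:Z + 0%:Z by ring.
  rewrite oeE //; have := floorD1_gt ((s - o 0%N) / p); rewrite -/d ltr_pdivrMr // => h; lra.
pose P := fun n : nat => s < OE (d * N%:Z + n%:Z).
have [m Pm mmin] := ex_minnP (ex_intro P N hPN).
have m0 : (0 < m)%N.
  rewrite lt0n; apply/negP => /eqP m0; move: Pm; rewrite /P m0 ltNge h1 //.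
exists (d * N%:Z + m%:Z); split => //.
have -> : d * N%:Z + m%:Z - 1 = d * N%:Z + (m.-1)%:Z.
  by rewrite -{1}(prednK m0) intS; ring.
rewrite leNgt; apply/negP => h; have := mmin _ h; rewrite -ltnS prednK // ltnn //.
Qed.


Definition Gap (i : int) := OE (i + 1) - OE i - LE i.

Lemma Gap_ge0 i : 0 <= Gap i.
Proof. rewrite /Gap; have := gap_ge0 i; lra. Qed.

Lemma Gap_shift i : Gap (i + N%:Z) = Gap i.
Proof.
rewrite /Gap; have -> : i + N%:Z + 1 = (i + 1) + 1 * N%:Z by ring.
have -> : i + N%:Z = i + 1 * N%:Z by ring.
rewrite !oe_shift Le_shift; ring.
Qed.

Lemma Le_shift1 i : LE (i + N%:Z) = LE i.
Proof. by have := Le_shift i 1; rewrite mul1r. Qed.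

Lemma shift_sum (F : nat -> R) a n : \sum_(a <= k < a + n) F k = \sum_(r < n) F (a + r)%N.
Proof.
elim: n => [|n IH]; first by rewrite addn0 big_geq // big_ord0.
by rewrite addnS big_nat_recr ?leq_addr //= IH big_ord_recr.
Qed.

Lemma tele j (n : nat) : OE (j + n%:Z) - OE j = \sum_(r < n) (LE (j + r%:Z) + Gap (j + r%:Z)).
Proof.
elim: n => [|n IH]; first by rewrite big_ord0 addr0 subrr.
rewrite big_ord_recr /= -IH /Gap.
have -> : j + n.+1%:Z = j + n%:Z + 1 by rewrite intS; ring.
ring.
Qed.

Lemma sumLE j : \sum_(r < N) LE (j + r%:Z) = \sum_(k < N) L k.
Proof.
rewrite (sum_period _ Le_shift1); apply: eq_bigr => k _.
by have := @LeE 0 k (ltn_ord k); rewrite mul0r add0r.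
Qed.

Lemma sumGap j : \sum_(r < N) Gap (j + r%:Z) = p - \sum_(k < N) L k.
Proof.
have := tele j N; rewrite big_split /= sumLE.
have := oe_shift j 1; rewrite mul1r => ->.
move=> h; have e : OE j + (1%:~R) * p - OE j = p by rewrite mul1r; ring.
lra.
Qed.

Lemma sum_split_period (G : int -> R) : (forall i, G (i + N%:Z) = G i) ->
  forall j0 (a m : nat), \sum_(r < a + m * N) G (j0 + r%:Z) =
     \sum_(r < a) G (j0 + r%:Z) + m%:R * \sum_(r < N) G (j0 + r%:Z).
Proof.
move=> hG j0 a; elim=> [|m IH]; first by rewrite mul0n addn0 mul0r addr0.
rewrite mulSnr addnA big_split_ord /= IH.
have -> : \sum_(i < N) G (j0 + (a + m * N + i)%:Z) = \sum_(r < N) G (j0 + r%:Z).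
  have := sum_period _ hG (j0 + (a + m * N)%:Z); rewrite (sum_period _ hG j0) => <-.
  by apply: eq_bigr => i _; rewrite PoszD addrA.
rewrite -nat1r mulrDl mul1r; ring.
Qed.


Lemma S_bound (s t : R) (j0 : int) (Rn : nat) (z : R) :
  s <= OE j0 -> s <= z -> z < s + t ->
  OE (j0 + Rn%:Z) - LGG (j0 + Rn%:Z) <= z -> z < OE (j0 + Rn%:Z) ->
  OE (j0 + Rn%:Z) - LGG (j0 + Rn%:Z) - OE j0 - \sum_(r < Rn) LE (j0 + r%:Z)
    < t - fine (lebesgue_measure (ST_set N p o L `&` cc s (s + t))).
Proof.
move=> hsj0 hsz hzt hz1 hz2.
set i := j0 + Rn%:Z.
set e := Num.min (OE i) (s + t).
have ez : z < e by rewrite lt_min; apply/andP.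
have eOi : e <= OE i by rewrite ge_min lexx.
have est : e <= s + t by rewrite ge_min lexx orbT.
set U := [set y | exists2 r, (r < Rn)%N & cc (OE (j0 + r%:Z)) (OE (j0 + r%:Z) + LE (j0 + r%:Z)) y].
have Xsub : ST_set N p o L `&` cc s (s + t) `<=` (cc s (OE j0) `|` U) `|` cc e (s + t).
  move=> y [[w /andP [h1 h2]] /andP [hs ht']].
  case: (leP y (OE j0)) => hy1; first by left; left; rewrite /cc /= hs hy1.
  case: (leP e y) => hy2; first by right; rewrite /cc /= hy2 ht'.
  left; right.
  have wj0 : j0 <= w.
    rewrite leNgt; apply/negP => wl; have := oe_lt_win _ _ wl; lra.
  have wi : w < i.
    rewrite ltNge; apply/negP => iw; have := oe_le _ _ iw; lra.
  exists (absz (w - j0)).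
    rewrite -ltz_nat gez0_abs ?subr_ge0 //; move: wi; rewrite /i; lra.
  have -> : j0 + (absz (w - j0))%:Z = w by rewrite gez0_abs ?subr_ge0 //; ring.
  by rewrite /cc /= h1 ltW.
have hU : (lebesgue_measure U <= (\sum_(r < Rn) LE (j0 + r%:Z))%:E)%E.
  apply: (@cover_sum _ Rn (fun r => cc (OE (j0 + r%:Z)) (OE (j0 + r%:Z) + LE (j0 + r%:Z)))
     (fun r => LE (j0 + r%:Z))) => [r _|y [r hr hy]]; last by exists r.
  have h0 := Le_ge0 (j0 + r%:Z).
  have := @lam_cc _ (OE (j0 + r%:Z)) (OE (j0 + r%:Z) + LE (j0 + r%:Z)).
  have -> : OE (j0 + r%:Z) + LE (j0 + r%:Z) - OE (j0 + r%:Z) = LE (j0 + r%:Z) by ring.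
  apply; lra.
have hB : (lebesgue_measure (ST_set N p o L `&` cc s (s + t)) <=
     ((OE j0 - s) + \sum_(r < Rn) LE (j0 + r%:Z) + (s + t - e))%:E)%E.
  apply: le_trans (lam_sub Xsub) _.
  apply: le_trans (lam_U _ _) _.
  rewrite !EFinD; apply: leeD; last exact: lam_cc est.
  apply: le_trans (lam_U _ _) _.
  apply: leeD => //; exact: lam_cc hsj0.
have := fine_le_bound (lam_ge0 _) hB.
lra.
Qed.


Lemma main_j0 (s t : R) (ht : 0 <= t) : exists j0 : int,
  let x := t - fine (lebesgue_measure (ST_set N p o L `&` cc s (s + t))) in
  (C%:E * lebesgue_measure (GB_set N p o L C ell `&` cc s (s + t)) <=
   (\sum_(u < N) LGG (j0 + u%:Z) * C *
     (Num.ceil ((x - (OE (j0 + u%:Z) - OE j0) + LGG (j0 + u%:Z)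
                 + \sum_(r < u.+1) LE (j0 + r%:Z))
               / (p - \sum_(r < N) LE (j0 + r%:Z))))%:~R)%:E)%E.
Proof.
have [j0 [hj1 hj2]] := exists_j0 s.
exists j0 => x.
set D := p - \sum_(r < N) LE (j0 + r%:Z).
have DE : D = \sum_(r < N) Gap (j0 + r%:Z) by rewrite sumGap /D sumLE.
have Dpos : 0 < D by rewrite /D sumLE; have := hpL; lra.
have x0 : 0 <= x.
  have st : s <= s + t by lra.
  have hsub : ST_set N p o L `&` cc s (s + t) `<=` cc s (s + t) by move=> y [].
  have := fine_le_bound (lam_ge0 _) (lam_sub_cc st hsub).
  rewrite /x; lra.
set c := fun u : nat => Num.ceil ((x - (OE (j0 + u%:Z) - OE j0) + LGG (j0 + u%:Z)
                 + \sum_(r < u.+1) LE (j0 + r%:Z)) / D).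
have yE : forall u : nat, x - (OE (j0 + u%:Z) - OE j0) + LGG (j0 + u%:Z)
                 + \sum_(r < u.+1) LE (j0 + r%:Z)
          = x - \sum_(r < u) Gap (j0 + r%:Z) + LGG (j0 + u%:Z) + LE (j0 + u%:Z).
  by move=> u; rewrite (tele j0 u) big_ord_recr big_split /=; ring.
have sumGu : forall u : nat, (u <= N)%N -> \sum_(r < u) Gap (j0 + r%:Z) <= D.
  move=> u uN; rewrite DE -(subnKC uN) big_split_ord /= lerDl.
  by apply: sumr_ge0 => i _; exact: Gap_ge0.
have c_ge0 : forall u : nat, (u < N)%N -> 0 < LGG (j0 + u%:Z) -> 0 <= c u.
  move=> u uN hLG; rewrite /c ceil_ge0 ltr_pdivlMr // yE.
  have := sumGu u (ltnW uN); have := Le_ge0 (j0 + u%:Z); lra.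
set W := fun u : nat => [set z | exists2 m : nat, (m < absz (c u))%N &
   cc (OE (j0 + (u + m * N)%:Z) - LGG (j0 + u%:Z)) (OE (j0 + (u + m * N)%:Z)) z].
set V := [set z | exists2 u : nat, (u < N)%N & W u z].
have cover : GB_set N p o L C ell `&` cc s (s + t) `<=` cc (s + t) (s + t) `|` V.
  move=> z [[i /andP [g1 g2]] /andP [zs zt]].
  case: (eqVneq z (s + t)) => [->|zne]; first by left; rewrite /cc /= lexx.
  right; have zlt : z < s + t by rewrite lt_neqAle zne.
  have ij0 : j0 <= i.
    rewrite leNgt; apply/negP => il.
    have il' : i <= j0 - 1 by rewrite -ltzD1 subrK.
    have := oe_le _ _ il'; lra.
  set Rn := absz (i - j0).
  have iE : i = j0 + Rn%:Z by rewrite /Rn gez0_abs ?subr_ge0 //; ring.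
  set u := (Rn %% N)%N; set m := (Rn %/ N)%N.
  have RnE : Rn = (u + m * N)%N by rewrite addnC -divn_eq.
  have uN : (u < N)%N by rewrite ltn_pmod.
  have LGi : LGG i = LGG (j0 + u%:Z).
    by rewrite iE RnE PoszD PoszM addrA LG_shift.
  exists u => //; exists m; last by rewrite -RnE -iE -LGi /cc /= g1 ltW.
  have g1' : OE (j0 + Rn%:Z) - LGG (j0 + Rn%:Z) <= z by rewrite -iE.
  have g2' : z < OE (j0 + Rn%:Z) by rewrite -iE.
  have key := S_bound _ _ _ _ _ (ltW hj2) zs zlt g1' g2'.
  move: key; rewrite -/x.
  have -> : OE (j0 + Rn%:Z) - LGG (j0 + Rn%:Z) - OE j0 - \sum_(r < Rn) LE (j0 + r%:Z)
       = \sum_(r < Rn) Gap (j0 + r%:Z) - LGG (j0 + Rn%:Z).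
    have := tele j0 Rn; rewrite big_split /=; lra.
  have hs := sum_split_period _ Gap_shift j0 u m.
  rewrite -RnE -DE in hs.
  rewrite -iE LGi hs => key.
  have LGpos : 0 < LGG (j0 + u%:Z) by rewrite -LGi; lra.
  have mlt : (m%:R : R) < (c u)%:~R.
    rewrite /c; apply: (lt_le_trans _ (ceil_ge _)).
    rewrite ltr_pdivlMr // yE.
    have := Le_ge0 (j0 + u%:Z); lra.
  have cpos := c_ge0 u uN LGpos.
  rewrite -ltz_nat gez0_abs //.
  by rewrite -(ltr_int R) /=.
have hV : (lebesgue_measure V <= (\sum_(u < N) \sum_(m0 < absz (c u)) LGG (j0 + u%:Z))%:E)%E.
  apply: (@cover_sum _ N W (fun u => \sum_(m0 < absz (c u)) LGG (j0 + u%:Z)))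
    => [u uN|z [u hu hz]]; last by exists u.
  apply: (@cover_sum _ (absz (c u))
      (fun m0 => cc (OE (j0 + (u + m0 * N)%:Z) - LGG (j0 + u%:Z)) (OE (j0 + (u + m0 * N)%:Z)))
      (fun _ => LGG (j0 + u%:Z))) => [m0 _|z [m0 hm hz]]; last by exists m0.
  have := @lam_cc _ (OE (j0 + (u + m0 * N)%:Z) - LGG (j0 + u%:Z)) (OE (j0 + (u + m0 * N)%:Z)).
  have -> : OE (j0 + (u + m0 * N)%:Z) - (OE (j0 + (u + m0 * N)%:Z) - LGG (j0 + u%:Z))
     = LGG (j0 + u%:Z) by ring.
  apply; have := LG_ge0 (j0 + u%:Z); lra.
have hG : (lebesgue_measure (GB_set N p o L C ell `&` cc s (s + t)) <=
    (\sum_(u < N) \sum_(m0 < absz (c u)) LGG (j0 + u%:Z))%:E)%E.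
  apply: le_trans (lam_sub cover) _; apply: le_trans (lam_U _ _) _.
  have h0 : (lebesgue_measure (cc (s + t) (s + t)) <= 0%:E)%E.
    by have := @lam_cc _ (s + t) (s + t) (lexx _); rewrite subrr.
  rewrite -[X in (_ <= X)%E]add0e; exact: leeD.
have C0 : (0 <= C%:E)%E by rewrite lee_fin ltW.
apply: le_trans (lee_wpmul2l C0 hG) _.
rewrite -EFinM lee_fin mulr_sumr; apply: ler_sum => u _.
rewrite sumr_const card_ord -mulr_natr.
have [LGz|LGp] : LGG (j0 + u%:Z) = 0 \/ 0 < LGG (j0 + u%:Z).
  by have := LG_ge0 (j0 + u%:Z); rewrite le_eqVlt => /orP [/eqP <-|->]; [left|right].
  by rewrite LGz !mul0r mulr0.
have cpos := c_ge0 u (ltn_ord u) LGp.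
have e : ((absz (c u))%:R : R) = (c u)%:~R by rewrite -{2}(gez0_abs cpos).
by rewrite e mulrA [C * _]mulrC.
Qed.

Lemma alpha_eq (j0 : int) (x : R) :
  alpha_GB N p o L C ell (absz (j0 %% N%:Z)%Z) x =
  \sum_(u < N) LGG (j0 + u%:Z) * C *
     (Num.ceil ((x - (OE (j0 + u%:Z) - OE j0) + LGG (j0 + u%:Z)
                 + \sum_(r < u.+1) LE (j0 + r%:Z))
               / (p - \sum_(r < N) LE (j0 + r%:Z))))%:~R.
Proof.
set j := absz (j0 %% N%:Z)%Z; set n := (j0 %/ N%:Z)%Z.
have j0E : j0 = j%:Z + n * N%:Z.
  by rewrite /j gez0_abs ?modz_ge0 ?NZ // addrC -divz_eq.
have eS : forall r : nat, j0 + r%:Z = (j + r)%N%:Z + n * N%:Z.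
  by move=> r; rewrite j0E PoszD; ring.
have eO : forall r : nat, OE (j0 + r%:Z) = OE ((j + r)%N%:Z) + n%:~R * p.
  by move=> r; rewrite eS oe_shift.
have eL : forall r : nat, LE (j0 + r%:Z) = LE ((j + r)%N%:Z).
  by move=> r; rewrite eS Le_shift.
have eG : forall r : nat, LGG (j0 + r%:Z) = LGG ((j + r)%N%:Z).
  by move=> r; rewrite eS LG_shift.
have eO0 : OE j0 = OE j%:Z + n%:~R * p by have := eO 0%N; rewrite addr0 addn0.
have eD : \sum_(r < N) LE (j0 + r%:Z) = \sum_(r < N) LE (j + r)%N%:Z.
  by apply: eq_bigr => r _; rewrite eL.
rewrite /alpha_GB !shift_sum -/j eD; apply: eq_bigr => u _.
have e1 : \sum_(r < u.+1) LE (j0 + r%:Z) = \sum_(j <= q < (j + u).+1) LE q%:Z.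
  by rewrite -addnS shift_sum; apply: eq_bigr => r _; rewrite eL.
rewrite e1 eG eO eO0.
have -> : OE (j + u)%N%:Z + n%:~R * p - (OE j%:Z + n%:~R * p) = OE (j + u)%N%:Z - OE j%:Z by ring.
by [].
Qed.

Lemma final (s t : R) (ht : 0 <= t) :
  (C%:E * dt_GB N p o L C ell s (s + t) <=
   (\big[Num.max/alpha_GB N p o L C ell 0%N
           (t - fine (dt_ST N p o L s (s + t)))]_(j < N)
       alpha_GB N p o L C ell j (t - fine (dt_ST N p o L s (s + t))))%:E)%E.
Proof.
have [j0 h] := main_j0 s t ht.
move: h; rewrite /= => h. apply: (le_trans h).
rewrite lee_fin -alpha_eq.
have jN : (absz (j0 %% N%:Z)%Z < N)%N.
  by rewrite -ltz_nat gez0_abs ?modz_ge0 ?NZ // ltz_pmod.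
exact: (le_bigmax _ (fun j : 'I_N => alpha_GB N p o L C ell j
          (t - fine (dt_ST N p o L s (s + t)))) (Ordinal jN)).
Qed.

End Proof4.

Theorem theorem4 (R : realType) (C p ell : R) (N : nat) (o L : nat -> R)
  (hC : 0 < C) (hp : 0 < p) (hN : (1 <= N)%N) (hell : 0 < ell)
  (ho0 : 0 <= o 0%N)
  (hoinc : forall k : nat, (k.+1 < N)%N -> o k < o k.+1)
  (holast : o N.-1 < p)
  (hL : forall k : nat, (k < N)%N -> 0 <= L k)
  (hwin : forall k : nat, (k.+1 < N)%N -> o k + L k <= o k.+1)
  (hwinlast : o N.-1 + L N.-1 <= o 0%N + p)
  (hpL : \sum_(k < N) L k < p)
  (s t : R) (ht : 0 <= t) :
  (C%:E * dt_GB N p o L C ell s (s + t) <=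
   (\big[Num.max/alpha_GB N p o L C ell 0%N
           (t - fine (dt_ST N p o L s (s + t)))]_(j < N)
       alpha_GB N p o L C ell j (t - fine (dt_ST N p o L s (s + t))))%:E)%E.
Proof.
by apply: final; try assumption.
Qed.
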